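(* Let $t\in\mathbb{R}$, $\mu>0$, $\sigma>0$, $\lambda>0$ with $\lambda\ge(\mu-t)_-$. Let $\mathcal{L}_{\lambda}(\mu,\sigma)$ be the set of probability distributions $F$ on $\mathbb{R}$ with $\mathbb{E}^F[X]=\mu$, $\mathbb{E}^F[X^2]=\mu^2+\sigma^2$ and $\mathbb{E}^F[(X-t)_-]\le\lambda$ (for $X\sim F$), and let $\mathcal{L}^+_{\lambda}(\mu,\sigma)=\{F\in\mathcal{L}_{\lambda}(\mu,\sigma): F(0-)=0\}$. If either $\lambda>(\mu-t)_-$, or $\lambda=(\mu-t)_-$ and $\sigma^2\le\mu(t-\mu)$, then \[ \sup_{F \in \mathcal{L}^+_{\lambda}(\mu, \sigma)} \mathbb{E}^{F}[(X-t)_{+}^2] = \sup_{F \in \mathcal{L}_{\lambda}(\mu, \sigma)} \mathbb{E}^{F}[(X-t)_{+}^2] = \begin{cases} \sigma^2 + (\mu-t)_+^2, & \lambda > (\mu-t)_-, \\ 0, & \lambda=(\mu-t)_-,~\sigma^2 \le \mu (t-\mu). \end{cases} \]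
   Context: For $x\in\mathbb{R}$, $(x)_+=\max\{x,0\}$ and $(x)_-=\max\{-x,0\}$. $F(0-)=\mathbb{P}(X<0)$ under $F$, so $F(0-)=0$ means $F$ is the distribution of a non-negative random variable. $\mathbb{E}^F$ denotes expectation when $X$ has distribution $F$. *)

(* Defs.v *)
(* distributions on R are probability measures
   on the Borel sigma-algebra of R : realType. *)
From HB Require Import structures.
From mathcomp Require Import all_boot all_order all_algebra.
From mathcomp Require Import all_classical all_reals all_analysis.
Set Implicit Arguments. Unset Strict Implicit. Unset Printing Implicit Defensive.
Import Order.TTheory GRing.Theory Num.Theory.
Local Open Scope classical_set_scope.
Local Open Scope ring_scope.

Definition pos_part {R : realType} (x : R) : R := Num.max x 0.
Definition neg_part {R : realType} (x : R) : R := Num.max (- x) 0.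

Definition Lset {R : realType} (t mu sigma lambda : R) : set (probability R R) :=
  [set F : probability R R |
     F.-integrable setT (fun x : R => x%:E) /\
     (\int[F]_x (x%:E) = mu%:E)%E /\
     (\int[F]_x ((x ^+ 2)%:E) = (mu ^+ 2 + sigma ^+ 2)%:E)%E /\
     (\int[F]_x ((neg_part (x - t))%:E) <= lambda%:E)%E].

(* L^+_lambda(mu,sigma): additionally F(0-) = P(X < 0) = 0. *)
Definition Lset_pos {R : realType} (t mu sigma lambda : R) : set (probability R R) :=
  [set F | Lset t mu sigma lambda F /\ F [set x : R | x < 0] = 0%E].

Definition stop_loss2 {R : realType} (t : R) (F : probability R R) : \bar R :=
  (\int[F]_x (((pos_part (x - t)) ^+ 2)%:E))%E.

(* Main.v *)
Require Import Defs.
From HB Require Import structures.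
From mathcomp Require Import all_boot all_order all_algebra.
From mathcomp Require Import all_classical all_reals all_analysis measurable_realfun.
From mathcomp Require Import ring lra.
Import Order.TTheory GRing.Theory Num.Theory.
Local Open Scope classical_set_scope.
Local Open Scope ring_scope.

Section TwoPoint.
Context {R : realType} (p a b : R) (p0 : 0 <= p) (p1 : p <= 1).
Let q0 : 0 <= 1 - p. Proof. by rewrite subr_ge0. Qed.
Definition tpm : set R -> \bar R :=
  measure_add (mscale (NngNum p0) (\d_b)) (mscale (NngNum q0) (\d_a)).
HB.instance Definition _ := Measure.copy tpm (measure_add (mscale (NngNum p0) (\d_b)) (mscale (NngNum q0) (\d_a))).

Lemma tpm_ge0_integral (g : R -> \bar R) : measurable_fun setT g ->
  (forall x, (0 <= g x)%E) -> (\int[tpm]_x g x = p%:E * g b + (1-p)%:E * g a)%E.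
Proof.
move=> mg g0.
rewrite /tpm ge0_integral_measure_add// !ge0_integral_mscale// !integral_dirac// !diracT !mul1e//.
Qed.

Let tpm_setT : tpm [set: R] = 1%E.
Proof.
have := tpm_ge0_integral (fun=> 1%E) (measurable_cst _) (fun=> lee01).
rewrite integral_cst//= mul1e => ->; by rewrite !mule1 -EFinD subrKC.
Qed.
HB.instance Definition _ := @Measure_isProbability.Build _ _ R tpm tpm_setT.
Lemma maxN0 (x : R) : Num.max x 0 - Num.max (- x) 0 = x.
Proof.
rewrite !maxEle; case: ifPn => h1; case: ifPn => h2; rewrite -?ltNge in h1 h2; lra.
Qed.

Lemma tpm_integral (f : R -> R) : measurable_fun setT f ->
  (\int[tpm]_x (f x)%:E = (p * f b + (1-p) * f a)%:E)%E.
Proof.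
move=> mf; have mfE : measurable_fun setT (fun x => (f x)%:E) by exact/measurable_EFinP.
rewrite integralE !tpm_ge0_integral//; last 2 first.
- exact: measurable_funeneg.
- exact: measurable_funepos.
rewrite !funeposE !funenegE /= -!EFin_max -!EFinM -!EFinD; congr EFin.
by rewrite opprD addrACA -!mulrBr !maxN0.
Qed.

Lemma tpm_integrable (f : R -> R) : measurable_fun setT f ->
  tpm.-integrable setT (fun x => (f x)%:E).
Proof.
move=> mf; have mfE : measurable_fun setT (fun x => (f x)%:E) by exact/measurable_EFinP.
apply/integrableP; split => //.
rewrite tpm_ge0_integral//; first exact: ltry.
exact: measurableT_comp.
Qed.
End TwoPoint.

Section UB.
Context {R : realType}.

Lemma mpos (t : R) : measurable_fun setT (fun x : R => pos_part (x - t)).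
Proof.
have := @measurable_funrpos _ _ R setT (fun x : R => x - t) (measurable_funB (@measurable_id _ _ setT) (measurable_cst t)).
by [].
Qed.

Lemma mneg (t : R) : measurable_fun setT (fun x : R => neg_part (x - t)).
Proof.
have := @measurable_funrneg _ _ R setT (fun x : R => x - t) (measurable_funB (@measurable_id _ _ setT) (measurable_cst t)).
by [].
Qed.

Lemma mpos2 (t : R) : measurable_fun setT (fun x : R => pos_part (x - t) ^+ 2).
Proof. exact: measurable_funX (mpos t). Qed.

Lemma msq : measurable_fun setT (fun x : R => x ^+ 2).
Proof. exact: measurable_funX (@measurable_id _ _ setT). Qed.

Local Open Scope ereal_scope.
Lemma int_x2 (F : probability R R) (s : R) :
  \int[F]_x ((x ^+ 2)%:E) = s%:E -> F.-integrable setT (fun x => (x ^+ 2)%:E).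
Proof.
move=> h; apply/integrableP; split; first by apply/measurable_EFinP; exact: msq.
under eq_integral => x _ do rewrite gee0_abs ?lee_fin ?sqr_ge0 //.
by rewrite h ltry.
Qed.

Lemma int_poly (F : probability R R) (c1 c0 : R) :
  F.-integrable setT (fun x => x%:E) ->
  F.-integrable setT (fun x => (x ^+ 2)%:E) ->
  \int[F]_x (((x ^+ 2) + c1 * x + c0)%:E) =
  \int[F]_x ((x ^+ 2)%:E) + c1%:E * \int[F]_x (x%:E) + c0%:E.
Proof.
move=> i1 i2.
have iZ : F.-integrable setT (fun x => c1%:E * x%:E) by exact: integrableZl.
rewrite (eq_integral (fun x : R => (x^+2)%:E + (c1%:E * x%:E) + c0%:E)); last first.
  by move=> x _; rewrite !EFinD EFinM.
rewrite integralD //; last 2 first.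
- exact: integrableD.
- exact: finite_measure_integrable_cst.
rewrite integralD // integralZl // integral_cst //.
rewrite -[c0%:E in RHS]mule1; congr (_ + _ * _); exact: probability_setT.
Qed.


Lemma pw_bound (x t mu : R) :
  (pos_part (x - t) ^+ 2 <= x ^+ 2 + (- (2 * Num.min mu t)) * x + Num.min mu t ^+ 2)%R.
Proof.
have hm : (Num.min mu t <= t)%R by rewrite ge_min lexx orbT.
move: (Num.min mu t) hm => m hm.
have hs := sqr_ge0 (x - m).
rewrite /pos_part maxEle; case: ifPn => h1.
  rewrite expr0n /=; nra.
rewrite -ltNge in h1.
have hp : (0 <= (t - m) * (x - t))%R by apply: mulr_ge0; lra.
nra.
Qed.

Lemma ubA (F : probability R R) (t mu sigma lambda : R) :
  Lset t mu sigma lambda F ->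
  stop_loss2 t F <= (sigma ^+ 2 + pos_part (mu - t) ^+ 2)%:E.
Proof.
case=> iX [EX [EX2 _]].
have iX2 := int_x2 F _ EX2.
set m := Num.min mu t.
apply: (@le_trans _ _ (\int[F]_x ((x ^+ 2 + (- (2 * m)) * x + m ^+ 2)%:E))).
  rewrite /stop_loss2; apply: ge0_le_integral => //.
  - by move=> x _; rewrite lee_fin; exact: sqr_ge0.
  - by apply/measurable_EFinP; exact: mpos2.
  - apply/measurable_EFinP.
    apply: measurable_funD; last exact: measurable_cst.
    apply: measurable_funD; first exact: msq.
    apply: measurable_funM; first exact: measurable_cst.
    exact: (@measurable_id _ _ setT).
  - by move=> x _; rewrite lee_fin; exact: pw_bound.
rewrite int_poly // EX EX2 -!EFinM -!EFinD lee_fin.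
rewrite /m /pos_part maxEle minEle; case: ifPn => h1; case: ifPn => h2;
  rewrite -?ltNge in h1 h2; nra.
Qed.


Lemma pos_negE (y : R) : pos_part y = (y + neg_part y)%R.
Proof. by rewrite /pos_part /neg_part !maxEle; case: ifPn => h1; case: ifPn => h2;
  rewrite -?ltNge in h1 h2; lra. Qed.

Lemma ubB (F : probability R R) (t mu sigma lambda : R) :
  Lset t mu sigma lambda F -> (mu + lambda <= t)%R -> stop_loss2 t F = 0.
Proof.
case=> iX [EX [EX2 En]] hl.
have mn : measurable_fun setT (fun x : R => (neg_part (x - t))%:E).
  by apply/measurable_EFinP; exact: mneg.
have mp : measurable_fun setT (fun x : R => (pos_part (x - t))%:E).
  by apply/measurable_EFinP; exact: mpos.
have n0 : forall x : R, 0 <= (neg_part (x - t))%:E.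
  by move=> x; rewrite lee_fin /neg_part le_max lexx orbT.
have p0 : forall x : R, 0 <= (pos_part (x - t))%:E.
  by move=> x; rewrite lee_fin /pos_part le_max lexx orbT.
have ineg : F.-integrable setT (fun x => (neg_part (x - t))%:E).
  apply/integrableP; split => //.
  under eq_integral => x _ do rewrite gee0_abs //.
  by apply: (le_lt_trans En); rewrite ltry.
have hpos : \int[F]_x (pos_part (x - t))%:E =
    (mu - t)%:E + \int[F]_x (neg_part (x - t))%:E.
  rewrite (eq_integral (fun x : R => x%:E + (- t)%:E + (neg_part (x - t))%:E)); last first.
    by move=> x _; rewrite -!EFinD pos_negE.
  rewrite integralD //; last first.
    apply: integrableD => //; exact: finite_measure_integrable_cst.
  rewrite integralD //; last exact: finite_measure_integrable_cst.
  rewrite integral_cst // EX.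
  suff -> : (- t)%:E * F [set: R] = (- t)%:E by rewrite -EFinD.
  rewrite -[RHS]mule1; congr (_ * _); exact: probability_setT.
have h0 : \int[F]_x `|(pos_part (x - t))%:E| = 0.
  under eq_integral => x _ do rewrite gee0_abs //.
  apply/eqP; rewrite eq_le integral_ge0 // andbT hpos.
  apply: (le_trans (leeD2l _ En)); rewrite -EFinD lee_fin; lra.
have hae := (ae_eq_integral_abs F measurableT mp).1 h0.
rewrite /stop_loss2 (@ae_eq_integral _ _ _ F setT (cst 0)) //.
- by rewrite integral0.
- by apply/measurable_EFinP; exact: mpos2.
- apply: filterS hae => x /= h /h [->]; by rewrite expr0n.
Qed.


Lemma tpm_set (p a b : R) (p0 : (0 <= p)%R) (p1 : (p <= 1)%R) (A : set R) :
  measurable A ->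
  tpm p a b p0 p1 A = (p%:E * (\1_A b)%:E + (1 - p)%:E * (\1_A a)%:E).
Proof.
move=> mA; rewrite -[in LHS](setIT A) -integral_indic // tpm_ge0_integral //.
by apply/measurable_EFinP; exact: measurable_indic.
Qed.

Lemma tp_props (t mu sigma s : R) : (0 < s)%R -> (0 < sigma)%R -> (sigma * s <= mu)%R ->
  let p := (s ^+ 2 / (1 + s ^+ 2))%R in
  let a := (mu - sigma * s)%R in let b := (mu + sigma / s)%R in
  exists F : probability R R,
   F.-integrable setT (fun x => x%:E) /\ \int[F]_x x%:E = mu%:E /\
       \int[F]_x (x ^+ 2)%:E = (mu ^+ 2 + sigma ^+ 2)%:E /\
       \int[F]_x (neg_part (x - t))%:E = (p * neg_part (b - t) + (1 - p) * neg_part (a - t))%:E /\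
       F [set x : R | (x < 0)%R] = 0 /\
       stop_loss2 t F = (p * pos_part (b - t) ^+ 2 + (1 - p) * pos_part (a - t) ^+ 2)%:E.
Proof.
move=> s0 sg0 hsm p a b.
have hs2 : (0 < 1 + s ^+ 2)%R by rewrite ltr_pwDl // sqr_ge0.
have p0 : (0 <= p)%R by rewrite /p divr_ge0 // ?sqr_ge0 // ltW.
have p1 : (p <= 1)%R by rewrite /p ler_pdivrMr // mul1r lerDr.
exists (tpm p a b p0 p1); split; [|split; [|split; [|split; [|split]]]].
- by apply: tpm_integrable; exact: (@measurable_id _ _ setT).
- rewrite tpm_integral; last exact: (@measurable_id _ _ setT).
  congr EFin; rewrite /p /a /b; field; apply/andP; split; rewrite ?gt_eqF //.
- rewrite tpm_integral; last exact: msq.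
  congr EFin; rewrite /p /a /b; field; apply/andP; split; rewrite ?gt_eqF //.
- by rewrite tpm_integral //; exact: mneg.
- have mA : measurable [set x : R | (x < 0)%R] by rewrite -set_itvNyo; exact: measurable_itv.
  apply: (eq_trans (@tpm_set p a b p0 p1 _ mA)).
  have ha : ~ [set x : R | (x < 0)%R] a by apply/negP; rewrite -leNgt /a subr_ge0.
  have hb : ~ [set x : R | (x < 0)%R] b.
    apply/negP; rewrite -leNgt /b addr_ge0 // ?divr_ge0 // ?ltW //.
    exact: lt_le_trans (mulr_gt0 sg0 s0) hsm.
  by rewrite !indicE (memNset ha) (memNset hb) !mule0 adde0.
- by rewrite /stop_loss2 tpm_integral //; exact: mpos2.
Qed.

Lemma np_ge0 (y : R) : (0 <= y)%R -> neg_part y = 0%R /\ pos_part y = y.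
Proof.
move=> y0; rewrite /neg_part /pos_part !maxEle; split; case: ifPn => h //; rewrite -?ltNge in h; lra.
Qed.

Lemma np_le0 (y : R) : (y <= 0)%R -> neg_part y = (- y)%R /\ pos_part y = 0%R.
Proof.
move=> y0; rewrite /neg_part /pos_part !maxEle; split; case: ifPn => h //; rewrite -?ltNge in h; lra.
Qed.

Lemma tp_in (t mu sigma lambda s : R) : (0 < s)%R -> (0 < sigma)%R -> (sigma * s <= mu)%R ->
  let p := (s ^+ 2 / (1 + s ^+ 2))%R in
  let a := (mu - sigma * s)%R in let b := (mu + sigma / s)%R in
  (p * neg_part (b - t) + (1 - p) * neg_part (a - t) <= lambda)%R ->
  exists F, Lset_pos t mu sigma lambda F /\
    stop_loss2 t F = (p * pos_part (b - t) ^+ 2 + (1 - p) * pos_part (a - t) ^+ 2)%:E.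
Proof.
move=> s0 sg0 hsm p a b hneg.
have [F [h1 [h2 [h3 [h4 [h5 h6]]]]]] := tp_props t _ _ _ s0 sg0 hsm.
exists F; split => //; split => //; split => //; split => //; split => //.
by rewrite h4 lee_fin.
Qed.

Lemma caseA2 (sg k e s : R) : (0 < sg)%R -> (0 <= k)%R -> (0 < e)%R -> (0 < s)%R ->
  (s <= 1)%R -> (s * (sg ^+ 2 + 2 * sg * k) <= e)%R ->
  (sg ^+ 2 - e <= (sg - s * k) ^+ 2 / (1 + s ^+ 2))%R.
Proof.
move=> sg0 k0 e0 s0 s1 hs.
have hs2 : (0 < 1 + s ^+ 2)%R by rewrite ltr_pwDl // sqr_ge0.
rewrite ler_pdivlMr //.
have h1 : (sg ^+ 2 * s ^+ 2 <= sg ^+ 2 * s)%R.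
  rewrite ler_pM2l ?exprn_gt0 // expr2; nra.
have h2 : (0 <= s ^+ 2 * k ^+ 2)%R by rewrite mulr_ge0 // sqr_ge0.
have h3 : (0 <= e * s ^+ 2)%R by rewrite mulr_ge0 ?sqr_ge0 // ltW.
nra.
Qed.
End UB.
Theorem corollary1 (R : realType) (t mu sigma lambda : R) :
  0 < mu -> 0 < sigma -> 0 < lambda -> neg_part (mu - t) <= lambda ->
  (neg_part (mu - t) < lambda \/
     (lambda = neg_part (mu - t) /\ sigma ^+ 2 <= mu * (t - mu))) ->
  let V : R := if neg_part (mu - t) < lambda
               then sigma ^+ 2 + pos_part (mu - t) ^+ 2 else 0 in
  ereal_sup [set stop_loss2 t F | F in Lset_pos t mu sigma lambda] = V%:E /\
  ereal_sup [set stop_loss2 t F | F in Lset t mu sigma lambda] = V%:E.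
Proof.
move=> mu0 sg0 l0 hl H V.
have ub : forall F, Lset t mu sigma lambda F -> (stop_loss2 t F <= V%:E)%E.
  move=> F LF; rewrite /V; case: ifPn => hlt; first exact: ubA F t mu sigma lambda LF.
  rewrite (ubB F t mu sigma lambda LF) //.
  case: H => [h|[hl' _]]; first by rewrite h in hlt.
  move: l0; rewrite hl' /neg_part maxEle; case: ifPn => h; rewrite -?ltNge in h; lra.
have sub : [set stop_loss2 t F | F in Lset_pos t mu sigma lambda] `<=`
           [set stop_loss2 t F | F in Lset t mu sigma lambda].
  by move=> y [F [LF _] <-]; exists F.
have sup2 : (ereal_sup [set stop_loss2 t F | F in Lset t mu sigma lambda] <= V%:E)%E.
  by apply/ereal_supP => y [F LF <-]; exact: ub.
have lb : (V%:E <= ereal_sup [set stop_loss2 t F | F in Lset_pos t mu sigma lambda])%E.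
  rewrite /V; case: ifPn => hlt; last first.
    case: H => [h|[hl' hsig]]; first by rewrite h in hlt.
    have hk : lambda = t - mu.
      move: l0; rewrite hl' /neg_part maxEle; case: ifPn => h; rewrite -?ltNge in h; lra.
    have hs0 : 0 < mu / sigma by rewrite divr_gt0.
    have hsm : sigma * (mu / sigma) <= mu by rewrite mulrC divfK ?gt_eqF.
    have hsne : mu / sigma != 0 by rewrite gt_eqF.
    have hb : mu + sigma / (mu / sigma) - t <= 0.
      have -> : sigma / (mu / sigma) = sigma ^+ 2 / mu by field; rewrite !gt_eqF.
      rewrite subr_le0 -lerBrDl ler_pdivrMr //; lra.
    have ha : mu - sigma * (mu / sigma) - t <= 0 by rewrite mulrC divfK ?gt_eqF //; lra.
    destruct (tp_in t mu sigma lambda (mu / sigma) hs0 sg0 hsm) as [F [LF HF]].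
      rewrite /= (np_le0 _ hb).1 (np_le0 _ ha).1 hk; rewrite le_eqVlt; apply/orP; left; apply/eqP.
      field; rewrite !gt_eqF ?ltr_pwDl ?sqr_ge0 ?divr_gt0 ?exprn_gt0 //.
    apply: le_ereal_sup_tmp; exists (stop_loss2 t F); first by exists F.
    by rewrite HF (np_le0 _ hb).2 (np_le0 _ ha).2 expr0n /= !mulr0 addr0.
  have [d0|d0] := ltP t mu.
    (* mu > t: the sup is attained *)
    pose m := Num.min (mu - t) mu.
    have m0 : 0 < m by rewrite lt_min subr_gt0 d0 mu0.
    have m1 : m <= mu - t by rewrite ge_min lexx.
    have m2 : m <= mu by rewrite ge_min lexx orbT.
    have hs0 : 0 < m / sigma by rewrite divr_gt0.
    have hsne : m / sigma != 0 by rewrite gt_eqF.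
    have hsm : sigma * (m / sigma) <= mu by rewrite mulrC divfK ?gt_eqF.
    have ha : 0 <= mu - sigma * (m / sigma) - t by rewrite mulrC divfK ?gt_eqF //; lra.
    have hb : 0 <= mu + sigma / (m / sigma) - t.
      have : 0 < sigma / (m / sigma) by rewrite divr_gt0.
      lra.
    destruct (tp_in t mu sigma lambda (m / sigma) hs0 sg0 hsm) as [F [LF HF]].
      rewrite /= (np_ge0 _ hb).1 (np_ge0 _ ha).1 !mulr0 addr0; exact: ltW.
    apply: le_ereal_sup_tmp; exists (stop_loss2 t F); first by exists F.
    rewrite HF (np_ge0 _ hb).2 (np_ge0 _ ha).2 (np_ge0 (mu - t) _).2; last by lra.
    rewrite lee_fin le_eqVlt; apply/orP; left; apply/eqP.
    field; rewrite !gt_eqF ?ltr_pwDl ?sqr_ge0 ?divr_gt0 ?exprn_gt0 //.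
  have hmt : mu - t <= 0 by rewrite subr_le0.
  rewrite (np_le0 _ hmt).1 in hlt; rewrite (np_le0 _ hmt).2 expr0n /= addr0.
  pose k := t - mu.
  have k0 : 0 <= k by rewrite subr_ge0.
  have g0 : 0 < lambda - k by rewrite subr_gt0 /k -opprB.
  apply/lee_addgt0Pr => e e0.
  pose c := sigma ^+ 2 + 2 * sigma * k.
  have c0 : 0 < c.
    have : 0 <= sigma * k by rewrite mulr_ge0 // ltW.
    have : 0 < sigma ^+ 2 by rewrite exprn_gt0.
    rewrite /c; lra.
  have k1 : 0 < 1 + k by rewrite ltr_pwDl.
  pose s := Num.min (Num.min (mu / sigma) ((lambda - k) / sigma))
                    (Num.min (sigma / (1 + k)) (Num.min 1 (e / c))).
  have s0 : 0 < s by rewrite /s !lt_min !divr_gt0 // ltr01.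
  have sa : s <= mu / sigma by rewrite /s !ge_min lexx.
  have sb : s <= (lambda - k) / sigma by rewrite /s !ge_min lexx !orbT.
  have sc : s <= sigma / (1 + k) by rewrite /s !ge_min lexx !orbT.
  have s1 : s <= 1 by rewrite /s !ge_min lexx !orbT.
  have sd : s <= e / c by rewrite /s !ge_min lexx !orbT.
  have hsm : sigma * s <= mu.
    by apply: le_trans (ler_wpM2l (ltW sg0) sa) _; rewrite mulrC divfK ?gt_eqF.
  have hsg : sigma * s <= lambda - k.
    by apply: le_trans (ler_wpM2l (ltW sg0) sb) _; rewrite mulrC divfK ?gt_eqF.
  have hsk : s * (1 + k) <= sigma.
    by apply: le_trans (ler_wpM2r (ltW k1) sc) _; rewrite divfK ?gt_eqF.
  have hse : s * c <= e.
    by apply: le_trans (ler_wpM2r (ltW c0) sd) _; rewrite divfK ?gt_eqF.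
  have hks : k <= sigma / s.
    have hks' : k * s <= sigma by nra.
    have si : 0 <= s^-1 by rewrite invr_ge0 ltW.
    have := ler_wpM2r si hks'.
    by rewrite mulfK ?gt_eqF.
  have ha : mu - sigma * s - t <= 0.
    have : 0 <= sigma * s by rewrite mulr_ge0 // ltW.
    rewrite /k in k0; lra.
  have hb : 0 <= mu + sigma / s - t by rewrite /k in hks; lra.
  have p0 : 0 <= s ^+ 2 / (1 + s ^+ 2) by rewrite divr_ge0 // ?sqr_ge0 // addr_ge0 // sqr_ge0.
  destruct (tp_in t mu sigma lambda s s0 sg0 hsm) as [F [LF HF]].
    rewrite /= (np_ge0 _ hb).1 (np_le0 _ ha).1 mulr0 add0r.
    have hy : 0 <= - (mu - sigma * s - t) by rewrite oppr_ge0.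
    have hyl : - (mu - sigma * s - t) <= lambda by rewrite /k in hsg; lra.
    have := mulr_ge0 p0 hy; nra.
  apply: (@le_trans _ _ (stop_loss2 t F + e%:E)%E); last first.
    apply: leeD2r; apply: le_ereal_sup_tmp; exists (stop_loss2 t F) => //; by exists F.
  rewrite HF -EFinD lee_fin (np_ge0 _ hb).2 (np_le0 _ ha).2 expr0n /= mulr0 addr0.
  have hv : s ^+ 2 / (1 + s ^+ 2) * (mu + sigma / s - t) ^+ 2 =
            (sigma - s * k) ^+ 2 / (1 + s ^+ 2).
    rewrite /k; field; rewrite !gt_eqF ?ltr_pwDl ?sqr_ge0 //.
  rewrite hv.
  have := caseA2 sigma k e s sg0 k0 e0 s0 s1 hse; lra.
split; apply/le_anti/andP; split.
- exact: le_trans (ereal_sup_le sub) sup2.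
- exact: lb.
- exact: sup2.
- exact: le_trans lb (ereal_sup_le sub).
Qed.
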